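(* Let $H$ be a residually free group. Then the restriction to $Z(H)$ of the abelianization map $H\to H_{ab}$ is injective. In particular, if $H$ is finitely generated then $Z(H)$ is finitely generated.
   Context: A group $H$ is residually free if for every non-trivial $h\in H$ there is a homomorphism from $H$ to a free group not killing $h$. $Z(H)$ is the center of $H$ and $H_{ab}=H/[H,H]$. *)

(* Defs.v *)
From Stdlib Require Import List.
Import ListNotations.
Set Implicit Arguments.

Record group := Group {
  carrier :> Type;
  gmul : carrier -> carrier -> carrier;
  ginv : carrier -> carrier;
  gone : carrier;
  gmulA : forall x y z, gmul x (gmul y z) = gmul (gmul x y) z;
  gmul1g : forall x, gmul gone x = x;
  gmulg1 : forall x, gmul x gone = x;
  gmulVg : forall x, gmul (ginv x) x = gone;
  gmulgV : forall x, gmul x (ginv x) = gone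
}.
Arguments gmul {g}.
Arguments ginv {g}.
Arguments gone {g}.

Definition is_hom {G K : group} (f : G -> K) : Prop :=
  forall x y : G, f (gmul x y) = gmul (f x) (f y).

Definition free_on {F : group} {X : Type} (b : X -> F) : Prop :=
  forall (K : group) (f : X -> K),
    exists g : F -> K, is_hom g /\ (forall x, g (b x) = f x) /\
      (forall g' : F -> K, is_hom g' -> (forall x, g' (b x) = f x) ->
         forall y, g' y = g y).

Definition is_free_group (F : group) : Prop :=
  exists (X : Type) (b : X -> F), free_on b.

Definition residually_free (H : group) : Prop :=
  forall h : H, h <> gone ->
    exists (F : group) (phi : H -> F),
      is_free_group F /\ is_hom phi /\ phi h <> gone.

Inductive in_gen {G : group} (S : G -> Prop) : G -> Prop :=
  | gen_one : in_gen S gone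
  | gen_mul : forall s x, S s -> in_gen S x -> in_gen S (gmul s x)
  | gen_mulV : forall s x, S s -> in_gen S x -> in_gen S (gmul (ginv s) x).

Definition commg {G : group} (a b : G) : G :=
  gmul (gmul (ginv a) (ginv b)) (gmul a b).

Definition in_derived {G : group} (x : G) : Prop :=
  in_gen (fun c => exists a b : G, c = commg a b) x.

Definition central {G : group} (z : G) : Prop :=
  forall x : G, gmul z x = gmul x z.

(* abelianization map H -> H/[H,H]: x and y have the same image iff x^-1 y in [H,H] *)
Definition ab_eq {G : group} (x y : G) : Prop :=
  in_derived (gmul (ginv x) y).

Definition fin_gen (G : group) : Prop :=
  exists l : list G, forall x : G, in_gen (fun s => In s l) x.

Definition center_fin_gen (G : group) : Prop :=
  exists l : list G, (forall s, In s l -> central s) /\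
    forall z : G, central z -> in_gen (fun s => In s l) z.

(* Main.v *)
Require Import Defs.
From Stdlib Require Import List Arith Lia ZArith Classical ClassicalEpsilon FunctionalExtensionality ProofIrrelevance Wf_nat.
Import ListNotations.
Module MG1.

Section GL.
Context {G : group}.
Implicit Types x y z : G.
Lemma mulKg x y : gmul (ginv x) (gmul x y) = y.
Proof. now rewrite gmulA, gmulVg, gmul1g. Qed.
Lemma mulVKg x y : gmul x (gmul (ginv x) y) = y.
Proof. now rewrite gmulA, gmulgV, gmul1g. Qed.
Lemma mulgI x y z : gmul x y = gmul x z -> y = z.
Proof. intro H. rewrite <- (mulKg x y), <- (mulKg x z), H. reflexivity. Qed.
Lemma mulIg x y z : gmul y x = gmul z x -> y = z.
Proof. intro H. rewrite <- (gmulg1 _ y), <- (gmulg1 _ z), <- (gmulgV _ x), !gmulA, H. reflexivity. Qed.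
Lemma invg_uniq x y : gmul x y = gone -> ginv x = y.
Proof. intro H. apply (mulgI x). now rewrite gmulgV. Qed.
Lemma invK x : ginv (ginv x) = x.
Proof. apply invg_uniq. apply gmulVg. Qed.
Lemma invM x y : ginv (gmul x y) = gmul (ginv y) (ginv x).
Proof. apply invg_uniq. rewrite <- gmulA, (gmulA _ y), gmulgV, gmul1g. apply gmulgV. Qed.
Lemma inv1 : ginv (@gone G) = gone.
Proof. apply invg_uniq. apply gmul1g. Qed.
End GL.

Ltac gnorm := repeat (rewrite ?invM, ?invK, ?inv1, ?gmul1g, ?gmulg1, <- ?gmulA, ?mulKg, ?mulVKg, ?gmulVg, ?gmulgV).

Lemma hom1 {G K : group} (f : G -> K) : is_hom f -> f gone = gone.
Proof. intro h. apply (mulgI (f gone)). rewrite <- h, !gmulg1. reflexivity. Qed.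
Lemma homV {G K : group} (f : G -> K) : is_hom f -> forall x, f (ginv x) = ginv (f x).
Proof. intros h x. symmetry. apply invg_uniq. rewrite <- h, gmulgV. apply hom1; auto. Qed.
End MG1.
Import MG1.
Module MW1.

Section Words.
Context {X : Type}.
Definition letter := (X * bool)%type.
Definition linv (a : letter) : letter := (fst a, negb (snd a)).
Lemma linvK a : linv (linv a) = a.
Proof. destruct a as [x e]; unfold linv; simpl; now rewrite Bool.negb_involutive. Qed.
Lemma linv_neq a : a <> linv a.
Proof. destruct a as [x e]; unfold linv; simpl; intro H; inversion H; destruct e; discriminate. Qed.

Definition reduced (l : list letter) := forall i a c,
  nth_error l i = Some a -> nth_error l (S i) = Some c -> c <> linv a.

Lemma reduced_nil : reduced [].
Proof. intros [|i] a c H; discriminate. Qed.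
Lemma reduced_cons a l : reduced l -> (forall c, nth_error l 0 = Some c -> c <> linv a) -> reduced (a :: l).
Proof. intros R H [|i] a' c E1 E2; simpl in *. inversion E1; subst; eauto. eauto. Qed.
Lemma reduced_tl a l : reduced (a :: l) -> reduced l.
Proof. intros R i a' c E1 E2. apply (R (S i)); auto. Qed.
Lemma reduced_hd a c l : reduced (a :: c :: l) -> c <> linv a.
Proof. intros R. apply (R 0); reflexivity. Qed.

Lemma reduced_app u v : reduced u -> reduced v ->
  (forall a c, nth_error u (pred (length u)) = Some a -> nth_error v 0 = Some c -> c <> linv a) ->
  reduced (u ++ v).
Proof.
  intros Ru Rv J i a c E1 E2.
  destruct (Nat.lt_ge_cases (S i) (length u)).
  - rewrite nth_error_app1 in E1, E2 by lia. eauto.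
  - destruct (Nat.eq_dec (S i) (length u)).
    + rewrite nth_error_app1 in E1 by lia. rewrite nth_error_app2 in E2 by lia.
      replace (S i - length u) with 0 in E2 by lia. apply (J a c); auto.
      replace (pred (length u)) with i by lia. auto.
    + rewrite nth_error_app2 in E1, E2 by lia.
      replace (S i - length u) with (S (i - length u)) in E2 by lia. eauto.
Qed.

Lemma reduced_app_l u v : reduced (u ++ v) -> reduced u.
Proof.
  intros R i a c E1 E2. apply (R i).
  - rewrite nth_error_app1; auto. apply nth_error_Some. congruence.
  - rewrite nth_error_app1; auto. apply nth_error_Some. congruence.
Qed.
Lemma reduced_app_r u v : reduced (u ++ v) -> reduced v.
Proof.
  intros R i a c E1 E2. apply (R (length u + i)).
  - rewrite nth_error_app2 by lia. now replace (length u + i - length u) with i by lia.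
  - rewrite nth_error_app2 by lia. now replace (S (length u + i) - length u) with (S i) by lia.
Qed.

Definition push (a : letter) (l : list letter) :=
  match l with
  | c :: l' => if excluded_middle_informative (c = linv a) then l' else a :: l
  | [] => [a]
  end.
Definition pushl (u v : list letter) := fold_right push v u.
Definition invl (u : list letter) := rev (map linv u).

Lemma push_red a l : reduced l -> reduced (push a l).
Proof.
  intros R. destruct l as [|c l']; simpl.
  - apply reduced_cons; auto using reduced_nil. intros c H; discriminate.
  - destruct (excluded_middle_informative (c = linv a)).
    + eapply reduced_tl; eauto.
    + apply reduced_cons; auto. intros c' H; simpl in H; inversion H; subst; auto.
Qed.

Lemma push_inv a l : reduced l -> push a (push (linv a) l) = l.
Proof.
  intros R. destruct l as [|c l']; simpl.
  - destruct (excluded_middle_informative (linv a = linv a)); tauto.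
  - destruct (excluded_middle_informative (c = linv (linv a))) as [E|E].
    + rewrite linvK in E. subst c. destruct l' as [|d l'']; simpl; auto.
      destruct (excluded_middle_informative (d = linv a)) as [E'|E']; auto.
      subst. exfalso. apply (reduced_hd _ _ _ R). reflexivity.
    + simpl. destruct (excluded_middle_informative (linv a = linv a)); tauto.
Qed.

Lemma pushl_red u v : reduced v -> reduced (pushl u v).
Proof. intros R; induction u; simpl; auto using push_red. Qed.

Lemma pushl_app u v w : pushl (u ++ v) w = pushl u (pushl v w).
Proof. unfold pushl. apply fold_right_app. Qed.

Lemma pushl_push a l w : reduced w -> pushl (push a l) w = push a (pushl l w).
Proof.
  intros R. destruct l as [|c l']; simpl; auto.
  destruct (excluded_middle_informative (c = linv a)) as [E|E]; simpl; auto.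
  subst c. rewrite push_inv; auto. apply pushl_red; auto.
Qed.

Lemma pushl_pushl u v w : reduced w -> pushl (pushl u v) w = pushl (u ++ v) w.
Proof.
  intros R. induction u as [|a u IH]; simpl; auto.
  rewrite pushl_push; auto. now rewrite IH.
Qed.

Lemma pushl_nil u : reduced u -> pushl u [] = u.
Proof.
  induction u as [|a u IH]; intros R; simpl; auto.
  rewrite IH by (eapply reduced_tl; eauto).
  destruct u as [|c u']; simpl; auto.
  destruct (excluded_middle_informative (c = linv a)) as [E|E]; auto.
  exfalso. exact (reduced_hd _ _ _ R E).
Qed.

Lemma pushl_invl u : pushl (invl u) u = [].
Proof.
  induction u as [|a u IH]; simpl; auto. unfold invl in *; simpl.
  rewrite pushl_app. simpl. rewrite linvK.
  destruct (excluded_middle_informative (a = a)); tauto.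
Qed.

Lemma invl_invl u : invl (invl u) = u.
Proof.
  unfold invl. rewrite map_rev, rev_involutive, map_map.
  rewrite <- (map_id u) at 2. apply map_ext. apply linvK.
Qed.

Lemma invl_red u : reduced u -> reduced (invl u).
Proof.
  induction u as [|a u IH]; intros R; simpl; auto using reduced_nil.
  unfold invl in *. simpl. apply reduced_app; auto.
  - apply IH. eapply reduced_tl; eauto.
  - apply reduced_cons; auto using reduced_nil. intros c H; discriminate.
  - intros a' c E1 E2. simpl in E2. inversion E2; subst c. clear E2.
    destruct u as [|d u']. simpl in E1. destruct (pred 0); discriminate.
    simpl in E1. rewrite length_app, length_rev, length_map in E1. simpl in E1.
    replace (pred (length u' + 1)) with (length u' + 0) in E1 by lia.
    rewrite nth_error_app2 in E1 by (rewrite length_rev, length_map; lia).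
    rewrite length_rev, length_map in E1. replace (length u' + 0 - length u') with 0 in E1 by lia.
    simpl in E1. inversion E1; subst a'. intro E. apply (reduced_hd _ _ _ R).
    apply (f_equal linv) in E. rewrite !linvK in E. rewrite E, linvK; reflexivity.
Qed.
End Words.
End MW1.
Import MW1.
Module MW2.
Local Set Implicit Arguments.

Section WG.
Variable X : Type.
Definition WT := {l : list (@letter X) | reduced l}.
Lemma WT_eq (u v : WT) : proj1_sig u = proj1_sig v -> u = v.
Proof. destruct u, v; simpl; intros; subst. f_equal. apply proof_irrelevance. Qed.
Definition Wmul (u v : WT) : WT := exist _ _ (pushl_red (proj1_sig u) _ (proj2_sig v)).
Definition Wone : WT := exist _ [] (@reduced_nil X).
Definition Winv (u : WT) : WT := exist _ _ (invl_red _ (proj2_sig u)).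
Lemma WmulA u v w : Wmul u (Wmul v w) = Wmul (Wmul u v) w.
Proof. apply WT_eq; simpl. rewrite pushl_pushl by apply (proj2_sig w). now rewrite pushl_app. Qed.
Lemma Wmul1 u : Wmul Wone u = u.
Proof. now apply WT_eq. Qed.
Lemma Wmulr1 u : Wmul u Wone = u.
Proof. apply WT_eq; simpl. apply pushl_nil, (proj2_sig u). Qed.
Lemma WmulV u : Wmul (Winv u) u = Wone.
Proof. apply WT_eq; simpl. apply pushl_invl. Qed.
Lemma WmulgV u : Wmul u (Winv u) = Wone.
Proof. apply WT_eq; simpl. rewrite <- (invl_invl (proj1_sig u)) at 1. apply pushl_invl. Qed.
Definition Wgroup : group := @Group WT Wmul Winv Wone WmulA Wmul1 Wmulr1 WmulV WmulgV.
End WG.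

Section Free.
Variables (F : group) (X : Type) (b : X -> F).
Hypothesis Hb : free_on b.
Definition lt (a : @letter X) : F := if snd a then b (fst a) else ginv (b (fst a)).
Definition val (l : list (@letter X)) : F := fold_right (fun a acc => gmul (lt a) acc) gone l.
Lemma val_app u v : val (u ++ v) = gmul (val u) (val v).
Proof. induction u; simpl. now rewrite gmul1g. now rewrite IHu, gmulA. Qed.
Lemma lt_inv a : gmul (lt a) (lt (linv a)) = gone.
Proof. destruct a as [x []]; unfold lt, linv; simpl. apply gmulgV. apply gmulVg. Qed.
Lemma lt_linv a : lt (linv a) = ginv (lt a).
Proof. symmetry. apply invg_uniq, lt_inv. Qed.
Lemma val_push a l : val (push a l) = gmul (lt a) (val l).
Proof.
  destruct l as [|c l']; simpl; auto.
  destruct (excluded_middle_informative (c = linv a)) as [E|E]; simpl; auto.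
  subst c. now rewrite gmulA, lt_inv, gmul1g.
Qed.
Lemma val_pushl u v : val (pushl u v) = gmul (val u) (val v).
Proof. induction u; simpl. now rewrite gmul1g. rewrite val_push, IHu. apply gmulA. Qed.
Lemma val_invl l : val (invl l) = ginv (val l).
Proof.
  induction l; simpl. now rewrite inv1. unfold invl in *; simpl.
  rewrite val_app, IHl, invM. simpl. now rewrite gmulg1, lt_linv.
Qed.

Lemma sing_red (x : X) : reduced [(x,true)].
Proof. apply reduced_cons. apply reduced_nil. intros c H; discriminate. Qed.

Lemma push_red_cons (a : @letter X) l : reduced (a :: l) -> push a l = a :: l.
Proof.
  intros R. destruct l as [|c l']; simpl; auto.
  destruct (excluded_middle_informative (c = linv a)) as [E|E]; auto.
  exfalso; exact (reduced_hd _ _ _ R E).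
Qed.

Lemma free_model : (forall y, exists l, reduced l /\ y = val l) /\
  (forall l1 l2, reduced l1 -> reduced l2 -> val l1 = val l2 -> l1 = l2).
Proof.
  destruct (Hb (Wgroup X) (fun x => exist _ [(x,true)] (sing_red x))) as [g [Hg [Hgb _]]].
  destruct (Hb F b) as [g0 [_ [_ Hu]]].
  assert (hh : is_hom (G:=Wgroup X) (fun u => val (proj1_sig u))).
  { intros u v. simpl. apply val_pushl. }
  assert (hg : forall y, val (proj1_sig (g y)) = y).
  { intro y. rewrite (Hu (fun y => val (proj1_sig (g y)))).
    - symmetry. apply (Hu (fun y => y)). intros u v; reflexivity. reflexivity.
    - intros u v. rewrite Hg. apply hh.
    - intro x. rewrite Hgb. simpl. apply gmulg1. }
  assert (gv : forall l, reduced l -> proj1_sig (g (val l)) = l).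
  { induction l as [|a l IH]; intros R; simpl.
    - rewrite (hom1 g Hg). reflexivity.
    - rewrite Hg. simpl. rewrite IH by (eapply reduced_tl; eauto).
      destruct a as [x []]; unfold lt; simpl.
      + rewrite Hgb. simpl. apply push_red_cons; auto.
      + rewrite (homV g Hg), Hgb. simpl. apply push_red_cons; auto. }
  split.
  - intro y. exists (proj1_sig (g y)). split. apply (proj2_sig (g y)). symmetry; apply hg.
  - intros l1 l2 R1 R2 E. rewrite <- (gv l1 R1), <- (gv l2 R2), E. reflexivity.
Qed.
End Free.
End MW2.
Import MW2.
Module MW3.

Section Cancel.
Context {X : Type}.
Lemma invl_app (u v : list (@letter X)) : invl (u ++ v) = invl v ++ invl u.
Proof. unfold invl. now rewrite map_app, rev_app_distr. Qed.
Lemma length_invl (u : list (@letter X)) : length (invl u) = length u.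
Proof. unfold invl. now rewrite length_rev, length_map. Qed.

Lemma cancel_dec (u v : list (@letter X)) : reduced u -> reduced v ->
  exists u1 s v1, u = u1 ++ s /\ v = invl s ++ v1 /\ reduced (u1 ++ v1).
Proof.
  revert v. induction u as [|x u IH] using rev_ind; intros v Ru Rv.
  - exists [], [], v. simpl. auto.
  - destruct v as [|c v'].
    + exists (u ++ [x]), [], []. rewrite app_nil_r. simpl. auto.
    + destruct (excluded_middle_informative (c = linv x)) as [E|E].
      * destruct (IH v' (reduced_app_l _ _ Ru) (reduced_tl _ _ Rv)) as (u1 & s & v1 & E1 & E2 & R).
        exists u1, (s ++ [x]), v1. subst. rewrite invl_app. simpl.
        rewrite app_assoc. auto.
      * exists (u ++ [x]), [], (c :: v'). simpl. rewrite app_nil_r. repeat split; auto.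
        apply reduced_app; auto. intros a c' E1 E2.
        rewrite length_app in E1. simpl in E1. replace (pred (length u + 1)) with (length u + 0) in E1 by lia.
        rewrite nth_error_app2 in E1 by lia. replace (length u + 0 - length u) with 0 in E1 by lia.
        simpl in *. congruence.
Qed.
End Cancel.

Section Per.
Context {X : Type}.
Variables (w : list (@letter X)) (d0 : @letter X).
Hypothesis Hw : w <> [].
Hypothesis Rw : reduced w.
Hypothesis Cw : forall x y, nth_error w 0 = Some x -> nth_error w (pred (length w)) = Some y -> x <> linv y.
Let n := length w.
Lemma n_pos : n <> 0.
Proof. unfold n. destruct w; simpl; congruence. Qed.
Definition P i := nth (i mod n) w d0.
Definition Ps s L := map P (seq s L).
Definition period d := forall i, P (d + i) = P i.

Lemma nth_Ps s L j : j < L -> nth_error (Ps s L) j = Some (P (s + j)).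
Proof. intros. unfold Ps. rewrite nth_error_map, nth_error_seq. destruct (Nat.ltb_spec j L); [reflexivity|lia]. Qed.
Lemma length_Ps s L : length (Ps s L) = L.
Proof. unfold Ps. now rewrite length_map, length_seq. Qed.

Lemma P_add_mul i k : P (i + k * n) = P i.
Proof. unfold P. now rewrite Nat.Div0.mod_add. Qed.
Lemma P_mod i : P i = P (i mod n).
Proof. unfold P. now rewrite Nat.Div0.mod_mod. Qed.

Lemma period_n : period n.
Proof. intro i. rewrite Nat.add_comm. rewrite <- (Nat.mul_1_l n) at 1. apply P_add_mul. Qed.

Lemma Ps_red s L : reduced (Ps s L).
Proof.
  intros i a c E1 E2.
  assert (Hi : S i < L). { rewrite <- (length_Ps s L). apply nth_error_Some. congruence. }
  rewrite nth_Ps in E1, E2 by lia. inversion E1; inversion E2; subst a c. clear E1 E2.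
  assert (Hn := n_pos).
  set (j := s + i). replace (s + S i) with (S j) by (unfold j; lia).
  rewrite (P_mod (S j)), (P_mod j).
  assert (Hm := Nat.mod_upper_bound j n Hn).
  assert (Hd := Nat.div_mod_eq j n).
  destruct (Nat.lt_ge_cases (S (j mod n)) n) as [Hlt|Hge].
  - replace (S j mod n) with (S (j mod n)).
    2:{ assert (E : S j = S (j mod n) + (j / n) * n) by lia. rewrite E, Nat.Div0.mod_add, (Nat.mod_small (S (j mod n))); auto. }
    unfold P. rewrite (Nat.mod_small (S (j mod n))) by lia. rewrite (Nat.mod_small (j mod n)) by lia.
    apply (Rw (j mod n)); apply nth_error_nth'; unfold n in *; lia.
  - replace (S j mod n) with 0.
    2:{ assert (E : S j = 0 + (S (j / n)) * n) by lia. rewrite E, Nat.Div0.mod_add. symmetry. apply Nat.Div0.mod_0_l. }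
    assert (j mod n = pred n) by lia. rewrite H. unfold P.
    rewrite Nat.Div0.mod_0_l. rewrite Nat.mod_small by lia.
    apply Cw; apply nth_error_nth'; unfold n in *; lia.
Qed.

Lemma Ps_app s x y : Ps s (x + y) = Ps s x ++ Ps (s + x) y.
Proof. unfold Ps. now rewrite seq_app, map_app. Qed.

Lemma Ps_shift d s L : period d -> Ps (d + s) L = Ps s L.
Proof.
  intros Hd. revert s; induction L as [|L IH]; intros s; simpl; auto.
  unfold Ps in *; simpl. rewrite Hd. f_equal. replace (S (d + s)) with (d + S s) by lia. apply IH.
Qed.

Lemma Ps_period_app d y : period d -> Ps 0 (d + y) = Ps 0 d ++ Ps 0 y.
Proof. intros Hd. rewrite Ps_app. simpl. rewrite <- (Nat.add_0_r d) at 2. now rewrite Ps_shift. Qed.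

Lemma period_add d e : period d -> period e -> period (d + e).
Proof. intros Hd He i. rewrite <- Nat.add_assoc, Hd. apply He. Qed.

Lemma Ps_n : Ps 0 n = w.
Proof.
  apply nth_error_ext. intro j. destruct (Nat.lt_ge_cases j n).
  - rewrite nth_Ps by auto. simpl. unfold P. rewrite Nat.mod_small by auto.
    symmetry. apply nth_error_nth'. auto.
  - rewrite (proj2 (nth_error_None _ _)), (proj2 (nth_error_None _ _)); auto.
    rewrite length_Ps; auto.
Qed.

Lemma firstn_Ps s L L' : L' <= L -> firstn L' (Ps s L) = Ps s L'.
Proof. intros. replace L with (L' + (L - L')) by lia. rewrite Ps_app, firstn_app, length_Ps.
  rewrite Nat.sub_diag. simpl. rewrite app_nil_r. apply firstn_all2. rewrite length_Ps; auto. Qed.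
Lemma skipn_Ps s L L' : L' <= L -> skipn L' (Ps s L) = Ps (s + L') (L - L').
Proof. intros. unfold Ps. rewrite skipn_map, skipn_seq. reflexivity. Qed.
End Per.
End MW3.
Import MW3.
Module MW4.

Lemma firstn_l {A} (l1 l2 : list A) k : k <= length l1 -> firstn k (l1 ++ l2) = firstn k l1.
Proof. intros. rewrite firstn_app. replace (k - length l1) with 0 by lia. simpl. apply app_nil_r. Qed.
Lemma skipn_l {A} (l1 l2 : list A) k : k <= length l1 -> skipn k (l1 ++ l2) = skipn k l1 ++ l2.
Proof. intros. rewrite skipn_app. now replace (k - length l1) with 0 by lia. Qed.
Lemma firstn_len {A} (l1 l2 : list A) : firstn (length l1) (l1 ++ l2) = l1.
Proof. rewrite firstn_l by lia. apply firstn_all. Qed.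
Lemma skipn_len {A} (l1 l2 : list A) : skipn (length l1) (l1 ++ l2) = l2.
Proof. rewrite skipn_l by lia. now rewrite skipn_all. Qed.

Definition npow {G : group} (x : G) (N : nat) : G := Nat.iter N (gmul x) gone.
Lemma npow_comm {G : group} (x y : G) N : gmul x y = gmul y x -> gmul (npow x N) y = gmul y (npow x N).
Proof.
  intros H. induction N; simpl. now rewrite gmul1g, gmulg1.
  rewrite <- gmulA, IHN, !gmulA, H. reflexivity.
Qed.

Section Key.
Variables (F : group) (X : Type) (b : X -> F).
Hypothesis Hb : free_on b.
Variables (w : list (@letter X)) (d0 : @letter X).
Hypothesis Hw : w <> [].
Hypothesis Rw : reduced w.
Hypothesis Cw : forall x y, nth_error w 0 = Some x -> nth_error w (pred (length w)) = Some y -> x <> linv y.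
Notation Q := (Ps w d0).
Notation V := (val F b).
Notation PP := (P w d0).

Lemma val_Q N : V (Q 0 (N * length w)) = npow (V w) N.
Proof.
  induction N; simpl. reflexivity.
  rewrite Ps_period_app by apply period_n. rewrite val_app, IHN, Ps_n. reflexivity.
Qed.

Lemma val_cancel u1 s v1 : gmul (V (u1 ++ s)) (V (invl s ++ v1)) = V (u1 ++ v1).
Proof. rewrite !val_app, val_invl. gnorm. reflexivity. Qed.

Lemma key y : gmul (V w) y = gmul y (V w) ->
  exists d, period w d0 d /\ (y = V (Q 0 d) \/ y = ginv (V (Q 0 d))).
Proof.
  intros Hy.
  destruct (free_model Hb) as [Hs Hi].
  destruct (Hs y) as [v [Rv Ey]]. subst y.
  set (m := length v). set (n := length w).
  assert (Hn : n <> 0) by (unfold n; destruct w; simpl; congruence).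
  set (N := S m).
  set (A := Q 0 (N * n)).
  assert (RA : reduced A) by (apply Ps_red; auto).
  assert (HA : gmul (V A) (V v) = gmul (V v) (V A)).
  { unfold A, n. rewrite val_Q. apply npow_comm; auto. }
  destruct (cancel_dec A v RA Rv) as (A1 & s & v2 & EA & Ev & R1).
  destruct (cancel_dec v A Rv RA) as (v1 & s' & A2 & Ev' & EA' & R2).
  assert (EX : A1 ++ v2 = v1 ++ A2).
  { apply Hi; auto. rewrite <- (val_cancel A1 s v2), <- (val_cancel v1 s' A2), <- EA, <- Ev, <- Ev', <- EA'. auto. }
  assert (LA : length A = N * n) by apply length_Ps.
  assert (HNn : N <= N * n) by nia.
  assert (HNn2 : n + m <= N * n) by (unfold N; nia).
  assert (L1 := f_equal (@length _) EA). assert (L2 := f_equal (@length _) Ev).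
  assert (L3 := f_equal (@length _) Ev'). assert (L4 := f_equal (@length _) EA').
  assert (L5 := f_equal (@length _) EX).
  rewrite !length_app in L1, L2, L3, L4, L5. rewrite length_invl in L2, L4.
  fold m in L2, L3.
  set (k := length s) in *.
  rewrite ?length_app in L5. assert (Hk : length s' = k) by lia.
  assert (EA1 : A1 = Q 0 (N * n - k)).
  { assert (E := firstn_len A1 s). rewrite <- EA in E. unfold A in E.
    rewrite firstn_Ps in E by lia. rewrite <- E. f_equal. lia. }
  assert (Es' : invl s' = Q 0 k).
  { assert (E := firstn_len (invl s') A2). rewrite <- EA' in E. unfold A in E.
    rewrite length_invl, Hk, firstn_Ps in E by lia. auto. }
  assert (EA2 : A2 = Q k (N * n - k)).
  { assert (E := skipn_len (invl s') A2). rewrite <- EA' in E. unfold A in E.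
    rewrite length_invl, Hk, skipn_Ps in E by lia. auto. }
  assert (Ev1 : v1 = Q 0 (m - k)).
  { assert (E := firstn_len v1 A2). rewrite <- EX, firstn_l in E by lia.
    replace (length v1) with (m - k) in E by lia.
    rewrite EA1, firstn_Ps in E by lia. auto. }
  assert (Ew : skipn (m - k) A1 ++ v2 = A2).
  { rewrite <- skipn_l by lia. rewrite EX. replace (m - k) with (length v1) by lia. apply skipn_len. }
  rewrite EA1, skipn_Ps, EA2 in Ew by lia.
  assert (Win : forall j, j < N * n - m -> PP (m - k + j) = PP (k + j)).
  { intros j Hj. assert (E := f_equal (fun l => nth_error l j) Ew). simpl in E.
    rewrite nth_error_app1 in E by (rewrite length_Ps; lia).
    rewrite !nth_Ps in E by lia. simpl in E. inversion E. reflexivity. }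
  assert (Wall : forall j, PP (m - k + j) = PP (k + j)).
  { intro j. assert (Hm := Nat.mod_upper_bound j n Hn). assert (Hd := Nat.div_mod_eq j n).
    assert (E1 : m - k + j = (m - k + j mod n) + (j / n) * n) by lia.
    assert (E2 : k + j = (k + j mod n) + (j / n) * n) by lia.
    rewrite E1, E2. unfold n. rewrite !P_add_mul. apply Win. fold n. lia. }
  assert (Hkn : k <= k * n) by nia.
  assert (Ev0 : v = Q 0 (m - k) ++ invl (Q 0 k)).
  { rewrite Ev', Ev1, <- Es', invl_invl. reflexivity. }
  destruct (Nat.le_gt_cases k (m - k)) as [Hle|Hgt].
  - set (e := m - k - k).
    assert (Pe : period w d0 e).
    { intro i. rewrite <- (P_add_mul w d0 i k), <- (P_add_mul w d0 (e + i) k). fold n.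
      replace (e + i + k * n) with (m - k + (i + k * n - k)) by (unfold e; lia).
      rewrite Wall. f_equal. lia. }
    exists e. split; auto. left.
    rewrite Ev0. replace (m - k) with (e + k) by (unfold e; lia).
    rewrite Ps_period_app by auto. rewrite !val_app, val_invl. gnorm. reflexivity.
  - set (d := k - (m - k)).
    assert (Pd : period w d0 d).
    { intro i. rewrite <- (P_add_mul w d0 i k), <- (P_add_mul w d0 (d + i) k). fold n.
      replace (d + i + k * n) with (k + (i + k * n - (m - k))) by (unfold d; lia).
      rewrite <- Wall. f_equal. lia. }
    exists d. split; auto. right.
    rewrite Ev0. replace k with (d + (m - k)) at 2 by (unfold d; lia).
    rewrite Ps_period_app by auto. rewrite !val_app, val_invl, val_app. gnorm. reflexivity.
Qed.
End Key.
End MW4.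
Import MW4.
Module MW5.

Definition CR {X : Type} (w : list (@letter X)) :=
  w <> [] /\ reduced w /\
  (forall x y, nth_error w 0 = Some x -> nth_error w (pred (length w)) = Some y -> x <> linv y).

Lemma decomp {X : Type} : forall N (l : list (@letter X)), length l < N -> reduced l -> l <> [] ->
  exists s w, l = s ++ w ++ invl s /\ CR w.
Proof.
  induction N as [|N IH]; intros l Hl Rl Hne. lia.
  destruct (classic (exists x y, nth_error l 0 = Some x /\ nth_error l (pred (length l)) = Some y /\ x = linv y))
    as [(x & y & E1 & E2 & E3)|Hn].
  - destruct l as [|x' l']. congruence. simpl in E1. inversion E1; subst x'. clear E1.
    destruct l' as [|c l''].
    + simpl in E2. inversion E2; subst y. exfalso. apply (linv_neq x). auto.
    + destruct (exists_last (l := c :: l'')) as [m [y' Em]]. congruence.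
      rewrite Em in *. simpl in E2. rewrite length_app in E2. simpl in E2.
      replace (length m + 1) with (S (length m)) in E2 by lia.
simpl in E2.       rewrite nth_error_app2 in E2 by lia. rewrite Nat.sub_diag in E2. simpl in E2. inversion E2; subst y'. clear E2.
      assert (Rm : reduced m) by (eapply reduced_app_l; eapply reduced_tl; eauto).
      destruct m as [|c' m'].
      * simpl in Rl. exfalso. apply (reduced_hd _ _ _ Rl). rewrite E3, linvK. reflexivity.
      * destruct (IH (c' :: m')) as (s & w & Es & Cw); auto.
        -- simpl in Hl. rewrite length_app in Hl. simpl in *. lia.
        -- congruence.
        -- exists (x :: s), w. split; auto. rewrite Es. unfold invl at 2. simpl. fold (invl s).
           simpl. rewrite E3, linvK. simpl. rewrite <- !app_assoc. reflexivity.
  - exists [], l. simpl. split. unfold invl; simpl. now rewrite app_nil_r.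
    split; auto. split; auto. intros x y E1 E2 E3. apply Hn. eauto.
Qed.

Section CT.
Variables (F : group) (X : Type) (b : X -> F).
Hypothesis Hb : free_on b.
Notation V := (val F b).
Definition commute {G : group} (x y : G) := gmul x y = gmul y x.

Lemma commute_inv_l {G : group} (x y : G) : commute x y -> commute (ginv x) y.
Proof. unfold commute; intros H. apply (mulgI x). gnorm. rewrite gmulA, H. gnorm. reflexivity. Qed.
Lemma commute_sym {G : group} (x y : G) : commute x y -> commute y x.
Proof. unfold commute; auto. Qed.

Lemma CT_cyc (w : list (@letter X)) : CR w -> forall y z, commute (V w) y -> commute (V w) z -> commute y z.
Proof.
  intros [Hw [Rw Cw]] y z Hy Hz.
  destruct w as [|d0 w']. congruence.
  destruct (key F X b Hb _ d0 Hw Rw Cw y Hy) as [d1 [P1 E1]].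
  destruct (key F X b Hb _ d0 Hw Rw Cw z Hz) as [d2 [P2 E2]].
  assert (C : commute (V (Ps (d0 :: w') d0 0 d1)) (V (Ps (d0 :: w') d0 0 d2))).
  { unfold commute. rewrite <- !val_app, <- !Ps_period_app by auto. now rewrite Nat.add_comm. }
  destruct E1 as [->| ->]; destruct E2 as [->| ->]; auto using commute_inv_l, commute_sym.
Qed.

Definition conj {G : group} (t x : G) := gmul (ginv t) (gmul x t).
Lemma conj_mul {G : group} (t x y : G) : conj t (gmul x y) = gmul (conj t x) (conj t y).
Proof. unfold conj. gnorm. reflexivity. Qed.
Lemma conj_inj {G : group} (t x y : G) : conj t x = conj t y -> x = y.
Proof. unfold conj. intros H. apply mulgI in H. apply mulIg in H. auto. Qed.
Lemma conj_commute {G : group} (t x y : G) : commute x y <-> commute (conj t x) (conj t y).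
Proof. unfold commute. rewrite <- !conj_mul. split; intro H. now rewrite H. now apply conj_inj in H. Qed.

Lemma CT (a y z : F) : a <> gone -> commute a y -> commute a z -> commute y z.
Proof.
  intros Ha Hy Hz.
  destruct (free_model Hb) as [Hs _].
  destruct (Hs a) as [l [Rl ->]].
  destruct l as [|c l']. simpl in Ha. congruence.
  destruct (decomp (S (length (c :: l'))) (c :: l')) as (s & w & E & Cw); auto. congruence.
  rewrite E in Hy, Hz. set (t := V s).
  assert (Et : conj t (V (s ++ w ++ invl s)) = V w).
  { unfold conj, t. rewrite !val_app, val_invl. gnorm. reflexivity. }
  apply (conj_commute t). apply (CT_cyc w Cw).
  - rewrite <- Et. now apply conj_commute.
  - rewrite <- Et. now apply conj_commute.
Qed.
End CT.
End MW5.
Import MW5.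
Module MW6.

Section Gen.
Context {G : group}.
Implicit Types x y z s : G.
Lemma in_gen_mul (S : G -> Prop) x y : in_gen S x -> in_gen S y -> in_gen S (gmul x y).
Proof.
  intros Hx Hy. induction Hx.
  - now rewrite gmul1g.
  - rewrite <- gmulA. now apply gen_mul.
  - rewrite <- gmulA. now apply gen_mulV.
Qed.
Lemma in_gen_S (S : G -> Prop) s : S s -> in_gen S s.
Proof. intros. rewrite <- (gmulg1 _ s). apply gen_mul; auto. apply gen_one. Qed.
Lemma in_gen_SV (S : G -> Prop) s : S s -> in_gen S (ginv s).
Proof. intros. rewrite <- (gmulg1 _ (ginv s)). apply gen_mulV; auto. apply gen_one. Qed.
Lemma in_gen_inv (S : G -> Prop) x : in_gen S x -> in_gen S (ginv x).
Proof.
  intros Hx. induction Hx.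
  - rewrite inv1. apply gen_one.
  - rewrite invM. apply in_gen_mul; auto. now apply in_gen_SV.
  - rewrite invM, invK. apply in_gen_mul; auto. now apply in_gen_S.
Qed.

Lemma der_comm x y : in_derived (commg x y).
Proof. apply in_gen_S. eauto. Qed.
Lemma der_mul x y : in_derived x -> in_derived y -> in_derived (gmul x y).
Proof. apply in_gen_mul. Qed.
Lemma der_inv x : in_derived x -> in_derived (ginv x).
Proof. apply in_gen_inv. Qed.
Lemma der_conj (u d : G) : in_derived d -> in_derived (gmul (ginv u) (gmul d u)).
Proof.
  intros Hd. replace (gmul (ginv u) (gmul d u)) with (gmul d (commg d u)).
  apply der_mul; auto using der_comm. unfold commg. gnorm. reflexivity.
Qed.

Definition cg x y := in_derived (gmul (ginv x) y).
Lemma cg_refl x : cg x x.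
Proof. unfold cg. rewrite gmulVg. apply gen_one. Qed.
Lemma cg_sym x y : cg x y -> cg y x.
Proof. unfold cg. intro H. apply der_inv in H. rewrite invM, invK in H. auto. Qed.
Lemma cg_trans x y z : cg x y -> cg y z -> cg x z.
Proof. unfold cg. intros H1 H2. replace (gmul (ginv x) z) with (gmul (gmul (ginv x) y) (gmul (ginv y) z)). apply der_mul; auto. gnorm. reflexivity. Qed.
Lemma cg_mul x x' y y' : cg x x' -> cg y y' -> cg (gmul x y) (gmul x' y').
Proof.
  unfold cg. intros H1 H2.
  replace (gmul (ginv (gmul x y)) (gmul x' y')) with
    (gmul (gmul (ginv y) (gmul (gmul (ginv x) x') y)) (gmul (ginv y) y')).
  apply der_mul; auto. apply der_conj; auto. gnorm. reflexivity.
Qed.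
Lemma cg_comm x y : cg (gmul x y) (gmul y x).
Proof. unfold cg. replace (gmul (ginv (gmul x y)) (gmul y x)) with (commg y x). apply der_comm.
  unfold commg. gnorm. reflexivity. Qed.
Lemma cg_inv x y : cg x y -> cg (ginv x) (ginv y).
Proof.
  intros H. apply cg_trans with (gmul (ginv x) (gmul y (ginv y))).
  - rewrite gmulgV, gmulg1. apply cg_refl.
  - apply cg_trans with (gmul (ginv x) (gmul x (ginv y))).
    + apply cg_mul. apply cg_refl. apply cg_mul. now apply cg_sym. apply cg_refl.
    + rewrite mulKg. apply cg_refl.
Qed.
Lemma cg_eq x y : x = y -> cg x y.
Proof. intros ->. apply cg_refl. Qed.

Lemma central1 : central (@gone G).
Proof. intro. now rewrite gmul1g, gmulg1. Qed.
Lemma central_mul x y : central x -> central y -> central (gmul x y).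
Proof. intros Hx Hy u. rewrite <- gmulA, Hy, gmulA, Hx, gmulA. reflexivity. Qed.
Lemma central_inv x : central x -> central (ginv x).
Proof. intros Hx u. apply (mulgI x). rewrite mulVKg, gmulA, Hx. gnorm. reflexivity. Qed.
End Gen.

Lemma commg_commute {G : group} (x y : G) : commute x y -> commg x y = gone.
Proof. unfold commute, commg. intros H. rewrite H. gnorm. reflexivity. Qed.

Lemma inj (H : group) (hH : residually_free H) (z : H) : central z -> in_derived z -> z = gone.
Proof.
  intros Cz Dz. apply NNPP. intro Hz.
  destruct (hH z Hz) as (F & phi & [X [b Hb]] & Hphi & Hpz).
  assert (K : forall d, in_derived d -> phi d = gone).
  { intros d Dd. induction Dd as [|s x [a [c ->]] _ IH|s x [a [c ->]] _ IH].
    - apply hom1; auto.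
    - rewrite Hphi, IH, gmulg1.
      unfold commg. rewrite !Hphi, !(homV phi Hphi). fold (commg (phi a) (phi c)).
      apply commg_commute. apply (CT F X b Hb (phi z)); auto;
      unfold commute; rewrite <- !Hphi, Cz; reflexivity.
    - rewrite Hphi, IH, gmulg1, (homV phi Hphi).
      unfold commg. rewrite !Hphi, !(homV phi Hphi). fold (commg (phi a) (phi c)).
      rewrite commg_commute, inv1; auto. apply (CT F X b Hb (phi z)); auto;
      unfold commute; rewrite <- !Hphi, Cz; reflexivity. }
  apply Hpz, K, Dz.
Qed.
End MW6.
Import MW6.
Module MW7.
Local Open Scope Z_scope.

Definition vec := nat -> Z.
Definition vzero : vec := fun _ => 0.
Definition vadd (u v : vec) : vec := fun i => u i + v i.
Definition vneg (u : vec) : vec := fun i => - u i.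
Definition smul (q : Z) (u : vec) : vec := fun i => q * u i.

Inductive span (L : list vec) : vec -> Prop :=
| sp0 : span L vzero
| spP g u : In g L -> span L u -> span L (vadd g u)
| spN g u : In g L -> span L u -> span L (vadd (vneg g) u).

Lemma span_mono L L' v : (forall g, In g L -> In g L') -> span L v -> span L' v.
Proof. intros H S; induction S. apply sp0. apply spP; auto. apply spN; auto. Qed.

Lemma span_smul L g u q : In g L -> span L u -> span L (vadd (smul q g) u).
Proof.
  intros Hg Hu. induction q using Z.peano_ind.
  - replace (vadd (smul 0 g) u) with u; auto.
  - replace (vadd (smul (Z.succ q) g) u) with (vadd g (vadd (smul q g) u)). now constructor.
    apply functional_extensionality; intro i; unfold vadd, smul; lia.
  - replace (vadd (smul (Z.pred q) g) u) with (vadd (vneg g) (vadd (smul q g) u)). now constructor.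
    apply functional_extensionality; intro i; unfold vadd, vneg, smul; lia.
Qed.

Section Sub.
Variable V : vec -> Prop.
Hypothesis V0 : V vzero.
Hypothesis Vadd : forall u v, V u -> V v -> V (vadd u v).
Hypothesis Vneg : forall v, V v -> V (vneg v).
Lemma V_smul q v : V v -> V (smul q v).
Proof.
  intros Hv. induction q using Z.peano_ind.
  - replace (smul 0 v) with vzero; auto.
  - replace (smul (Z.succ q) v) with (vadd v (smul q v)); auto.
    apply functional_extensionality; intro i; unfold vadd, smul; lia.
  - replace (smul (Z.pred q) v) with (vadd (vneg v) (smul q v)); auto.
    apply functional_extensionality; intro i; unfold vadd, vneg, smul; lia.
Qed.
End Sub.

Lemma subZn_fg : forall n (V : vec -> Prop), V vzero -> (forall u v, V u -> V v -> V (vadd u v)) ->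
  (forall v, V v -> V (vneg v)) -> (forall v, V v -> forall i, (n <= i)%nat -> v i = 0) ->
  exists L, (forall g, In g L -> V g) /\ forall v, V v -> span L v.
Proof.
  induction n as [|n IH]; intros V V0 Vadd Vneg Vs.
  - exists []. split. intros g []. intros v Hv.
    replace v with vzero. constructor. apply functional_extensionality; intro i. symmetry. apply Vs; auto. lia.
  - destruct (classic (forall v, V v -> v n = 0)) as [Hall|Hex].
    + apply IH; auto. intros v Hv i Hi. destruct (Nat.eq_dec i n). subst; auto. apply Vs; auto. lia.
    + apply not_all_ex_not in Hex. destruct Hex as [v0 Hv0].
      apply imply_to_and in Hv0. destruct Hv0 as [Hv0 Hn0].
      set (Pk := fun k : nat => exists v, V v /\ v n = Z.of_nat (S k)).
      assert (Hne : exists k, Pk k).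
      { destruct (Z_lt_le_dec 0 (v0 n)).
        - exists (Z.to_nat (v0 n - 1)). exists v0. split; auto. lia.
        - exists (Z.to_nat (- v0 n - 1)). exists (vneg v0). split; auto. unfold vneg. lia. }
      destruct (dec_inh_nat_subset_has_unique_least_element Pk (fun k => classic (Pk k)) Hne)
        as [k0 [[[vd [Hvd Evd]] Hmin] _]].
      set (d := Z.of_nat (S k0)) in *.
      assert (Hdmin : forall v, V v -> 0 < v n -> d <= v n).
      { intros v Hv Hp. assert (Pk (Z.to_nat (v n - 1))). { exists v. split; auto. lia. }
        apply Hmin in H. unfold d. lia. }
      set (V' := fun v => V v /\ v n = 0).
      destruct (IH V') as [L' [HL'1 HL'2]].
      * split; auto.
      * intros u v [Hu Eu] [Hv Ev]. split; auto. unfold vadd. lia.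
      * intros v [Hv Ev]. split; auto. unfold vneg. lia.
      * intros v [Hv Ev] i Hi. destruct (Nat.eq_dec i n). subst; auto. apply Vs; auto. lia.
      * exists (vd :: L'). split.
        -- intros g [<-|Hg]; auto. apply HL'1; auto.
        -- intros v Hv.
           set (q := v n / d). set (r := v n mod d).
           assert (Hd : 0 < d) by (unfold d; lia).
           assert (Hqr : v n = d * q + r) by (apply Z.div_mod; lia).
           assert (Hr : 0 <= r < d) by (apply Z.mod_pos_bound; lia).
           set (u := vadd (smul (- q) vd) v).
           assert (Hu : V u) by (apply Vadd; auto; apply V_smul; auto).
           assert (Eu : u n = r) by (unfold u, vadd, smul; rewrite Evd; fold d; lia).
           assert (Hr0 : r = 0).
           { destruct (Z.eq_dec r 0); auto. assert (d <= u n) by (apply Hdmin; auto; lia). lia. }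
           replace v with (vadd (smul q vd) u).
           apply span_smul. left; auto. apply span_mono with L'. intros; right; auto.
           apply HL'2. split; auto. lia.
           apply functional_extensionality; intro i. unfold u, vadd, smul. lia.
Qed.
End MW7.
Import MW7.
Module MW8.

Section ZP.
Context {G : group}.
Definition zpow (x : G) (z : Z) : G :=
  match z with
  | Z0 => gone
  | Zpos p => npow x (Pos.to_nat p)
  | Zneg p => ginv (npow x (Pos.to_nat p))
  end.
Lemma npow_S_r (x : G) k : npow x (S k) = gmul (npow x k) x.
Proof. simpl. symmetry. apply (npow_comm x x k). reflexivity. Qed.
Lemma zpow_succ (x : G) z : zpow x (Z.succ z) = gmul x (zpow x z).
Proof.
  destruct z as [|p|p].
  - simpl. now rewrite gmulg1.
  - replace (Z.succ (Z.pos p)) with (Z.pos (Pos.succ p)) by lia. simpl. rewrite Pos2Nat.inj_succ. reflexivity.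
  - destruct (Pos.succ_pred_or p) as [->|E].
    + simpl. now rewrite gmulg1, gmulgV.
    + rewrite <- E. replace (Z.succ (Z.neg (Pos.succ (Pos.pred p)))) with (Z.neg (Pos.pred p)) by lia.
      simpl. rewrite Pos2Nat.inj_succ, npow_S_r. gnorm. reflexivity.
Qed.
Lemma zpow_pred (x : G) z : zpow x (Z.pred z) = gmul (ginv x) (zpow x z).
Proof. rewrite <- (Z.succ_pred z) at 2. rewrite zpow_succ. gnorm. reflexivity. Qed.
Lemma zpow_add (x : G) a c : zpow x (a + c) = gmul (zpow x a) (zpow x c).
Proof.
  induction a using Z.peano_ind.
  - simpl. now rewrite gmul1g.
  - replace (Z.succ a + c)%Z with (Z.succ (a + c)) by lia. rewrite !zpow_succ, IHa. apply gmulA.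
  - replace (Z.pred a + c)%Z with (Z.pred (a + c)) by lia. rewrite !zpow_pred, IHa. apply gmulA.
Qed.
Lemma zpow1 (x : G) : zpow x 1 = x.
Proof. simpl. apply gmulg1. Qed.

Fixpoint E (l : list G) (v : vec) : G :=
  match l with
  | [] => gone
  | g :: l' => gmul (zpow g (v 0%nat)) (E l' (fun i => v (S i)))
  end.

Lemma cg_swap (a b c d : G) : cg (gmul (gmul a b) (gmul c d)) (gmul (gmul a c) (gmul b d)).
Proof.
  apply cg_trans with (gmul a (gmul (gmul b c) d)). apply cg_eq. gnorm. reflexivity.
  apply cg_trans with (gmul a (gmul (gmul c b) d)).
  apply cg_mul. apply cg_refl. apply cg_mul. apply cg_comm. apply cg_refl.
  apply cg_eq. gnorm. reflexivity.
Qed.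

Lemma E_add l : forall u v, cg (E l (vadd u v)) (gmul (E l u) (E l v)).
Proof.
  induction l as [|g l IH]; intros u v; simpl.
  - apply cg_eq. now rewrite gmul1g.
  - unfold vadd at 1. rewrite zpow_add.
    apply cg_trans with (gmul (gmul (zpow g (u 0%nat)) (zpow g (v 0%nat))) (gmul (E l (fun i => u (S i))) (E l (fun i => v (S i))))).
    + apply cg_mul. apply cg_refl. apply (IH (fun i => u (S i)) (fun i => v (S i))).
    + apply cg_swap.
Qed.

Lemma E_zero l : E l vzero = gone.
Proof. induction l; simpl; auto. unfold vzero in *. rewrite IHl. apply gmul1g. Qed.

Lemma E_neg l v : cg (E l (vneg v)) (ginv (E l v)).
Proof.
  assert (H := E_add l v (vneg v)).
  replace (vadd v (vneg v)) with vzero in H by (apply functional_extensionality; intro; unfold vadd, vneg, vzero; lia).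
  rewrite E_zero in H.
  apply cg_trans with (gmul (ginv (E l v)) (gmul (E l v) (E l (vneg v)))).
  apply cg_eq. gnorm. reflexivity.
  apply cg_trans with (gmul (ginv (E l v)) gone).
  apply cg_mul. apply cg_refl. apply cg_sym. auto. apply cg_eq. apply gmulg1.
Qed.

Definition ev (i : nat) : vec := fun j => if Nat.eqb j i then 1%Z else 0%Z.
Lemma E_ev l : forall i, (i < length l)%nat -> E l (ev i) = nth i l gone.
Proof.
  induction l as [|g l IH]; intros i Hi; simpl in *. lia.
  destruct i as [|i]; simpl.
  - replace (fun j => ev 0 (S j)) with vzero by (apply functional_extensionality; intro; reflexivity).
    rewrite E_zero. now rewrite !gmulg1.
  - replace (fun j => ev (S i) (S j)) with (ev i) by (apply functional_extensionality; intro; reflexivity).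
    rewrite IH by lia. apply gmul1g.
Qed.
End ZP.

Definition supp (v : vec) (n : nat) := forall i, (n <= i)%nat -> v i = 0%Z.

Lemma coverage {G : group} (l : list G) x : in_gen (fun s => In s l) x ->
  exists v, supp v (length l) /\ cg x (E l v).
Proof.
  intros Hx. induction Hx as [|s x Hs _ [v [Sv Cv]]|s x Hs _ [v [Sv Cv]]].
  - exists vzero. split. intros i _; reflexivity. rewrite E_zero. apply cg_refl.
  - destruct (In_nth l s gone Hs) as [i [Hi Ei]].
    exists (vadd (ev i) v). split.
    + intros j Hj. unfold vadd, ev. rewrite Sv by lia. destruct (Nat.eqb_spec j i); lia.
    + apply cg_sym. eapply cg_trans. apply E_add. rewrite E_ev, Ei by auto.
      apply cg_mul. apply cg_refl. now apply cg_sym.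
  - destruct (In_nth l s gone Hs) as [i [Hi Ei]].
    exists (vadd (vneg (ev i)) v). split.
    + intros j Hj. unfold vadd, vneg, ev. rewrite Sv by lia. destruct (Nat.eqb_spec j i); lia.
    + apply cg_sym. eapply cg_trans. apply E_add.
      apply cg_mul. eapply cg_trans. apply E_neg. rewrite E_ev, Ei by auto. apply cg_refl. now apply cg_sym.
Qed.
End MW8.
Import MW8.

Theorem mainTheorem8 (H : group) (hH : residually_free H) :
  (forall z1 z2 : H, central z1 -> central z2 -> ab_eq z1 z2 -> z1 = z2) /\
  (fin_gen H -> center_fin_gen H).
Proof.
  split.
  - intros z1 z2 C1 C2 Hab.
    assert (E := inj H hH _ (central_mul _ _ (central_inv _ C1) C2) Hab).
    apply (mulgI (ginv z1)). rewrite E. apply (gmulVg _ z1).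
  - intros [l Hl].
    set (n := length l).
    set (V := fun v => supp v n /\ exists z, central z /\ cg z (E l v)).
    destruct (subZn_fg n V) as [L [HL1 HL2]].
    + split. intros i _; reflexivity. exists gone. split. apply central1. rewrite E_zero. apply cg_refl.
    + intros u v [Su [zu [Cu Hu]]] [Sv [zv [Cv Hv]]]. split.
      * intros i Hi. unfold vadd. rewrite Su, Sv by auto. reflexivity.
      * exists (gmul zu zv). split. apply central_mul; auto.
        eapply cg_trans. apply cg_mul; eauto. apply cg_sym, E_add.
    + intros v [Sv [z [Cz Hz]]]. split.
      * intros i Hi. unfold vneg. rewrite Sv by auto. reflexivity.
      * exists (ginv z). split. apply central_inv; auto.
        eapply cg_trans. apply cg_inv; eauto. apply cg_sym, E_neg.
    + intros v [Sv _]. exact Sv.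
    + assert (Pick : forall L, (forall g, In g L -> V g) -> exists zs, (forall z, In z zs -> central z) /\
          forall g, In g L -> exists z, In z zs /\ cg z (E l g)).
      { induction L0 as [|g L0 IH]; intros HV.
        - exists []. split. intros z []. intros g [].
        - destruct IH as [zs [Z1 Z2]]. intros; apply HV; right; auto.
          destruct (HV g (or_introl eq_refl)) as [_ [zg [Cg Hg]]].
          exists (zg :: zs). split.
          + intros z [<-|Hz]; auto.
          + intros g' [<-|Hg']. exists zg; split; auto. left; auto.
            destruct (Z2 g' Hg') as [z [Hz Cz]]. exists z; split; auto. right; auto. }
      destruct (Pick L HL1) as [zs [Z1 Z2]].
      exists zs. split; auto.
      assert (K : forall v, span L v -> forall z, central z -> cg z (E l v) -> in_gen (fun s => In s zs) z).
      { intros v Sp. induction Sp as [|g u Hg Sp IH|g u Hg Sp IH]; intros z Cz Hz.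
        - rewrite E_zero in Hz. unfold cg in Hz. rewrite gmulg1 in Hz.
          assert (E0 := inj H hH _ (central_inv _ Cz) Hz).
          replace z with (@gone H). apply gen_one.
          rewrite <- (invK z), E0. symmetry. apply inv1.
        - destruct (Z2 g Hg) as [zg [Izg Hzg]].
          replace z with (gmul zg (gmul (ginv zg) z)) by (gnorm; reflexivity).
          apply gen_mul; auto. apply IH.
          + apply central_mul; auto. apply central_inv; auto.
          + apply cg_trans with (gmul (ginv zg) (gmul (E l g) (E l u))).
            apply cg_mul. apply cg_refl. eapply cg_trans. apply Hz. apply E_add.
            apply cg_trans with (gmul (ginv (E l g)) (gmul (E l g) (E l u))).
            apply cg_mul. apply cg_inv; auto. apply cg_refl.
            apply cg_eq. gnorm. reflexivity.
        - destruct (Z2 g Hg) as [zg [Izg Hzg]].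
          replace z with (gmul (ginv zg) (gmul zg z)) by (gnorm; reflexivity).
          apply gen_mulV; auto. apply IH.
          + apply central_mul; auto.
          + apply cg_trans with (gmul zg (gmul (ginv (E l g)) (E l u))).
            apply cg_mul. apply cg_refl. eapply cg_trans. apply Hz. eapply cg_trans. apply E_add.
            apply cg_mul. apply E_neg. apply cg_refl.
            apply cg_trans with (gmul (E l g) (gmul (ginv (E l g)) (E l u))).
            apply cg_mul. auto. apply cg_refl.
            apply cg_eq. gnorm. reflexivity. }
      intros z Cz.
      destruct (coverage l z (Hl z)) as [v [Sv Cv]].
      apply (K v); auto. apply HL2. split; eauto.
Qed.
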